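(* Let $N\ge3$ be an integer, $p>(N+2)/(N-2)$, $b>0$, $\lambda>0$, and suppose the problem $u''+\frac{N-1}{r}u'+\lambda u+u^p=0$ on $(0,b)$, $u'(0)=u(b)=0$, has a positive solution $u_0$. Let $\phi$ be the solution of $\phi''+\frac{N-1}{r}\phi'+\lambda\phi=0$ for $r>0$, $\phi(0)=1$, $\phi'(0)=0$. Then $\phi(r)>0$ for all $r\in[0,b]$.
   Context: A positive solution means $u_0(r)>0$ for $r\in[0,b)$. *)

(* Defs.v *)
From Stdlib Require Import Reals.
From Coquelicot Require Import Coquelicot.
Open Scope R_scope.

Definition positive_solution (N : nat) (p lam b : R) (u : R -> R) : Prop :=
  (forall r, 0 < r < b ->
     ex_derive u r /\ ex_derive (Derive u) r /\
     Derive (Derive u) r + (INR N - 1) / r * Derive u r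
       + lam * u r + Rpower (u r) p = 0) /\
  filterlim u (at_right 0) (locally (u 0)) /\
  filterlim (Derive u) (at_right 0) (locally 0) /\
  filterlim u (at_left b) (locally (u b)) /\
  u b = 0 /\
  (forall r, 0 <= r < b -> 0 < u r).

Definition linear_solution (N : nat) (lam : R) (phi : R -> R) : Prop :=
  (forall r, 0 < r ->
     ex_derive phi r /\ ex_derive (Derive phi) r /\
     Derive (Derive phi) r + (INR N - 1) / r * Derive phi r + lam * phi r = 0) /\
  filterlim phi (at_right 0) (locally (phi 0)) /\
  phi 0 = 1 /\
  filterlim (Derive phi) (at_right 0) (locally 0).

(* Main.v *)
Require Import Defs.
From Stdlib Require Import Reals Lra Lia Classical.
From Coquelicot Require Import Coquelicot.
Open Scope R_scope.


Lemma ball_R (x e y : R) : ball x e y <-> Rabs (y - x) < e.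
Proof. split; intro H; exact H. Qed.

Lemma at_left_eps f z L : filterlim f (at_left z) (locally L) ->
  forall eps, 0 < eps -> exists d, 0 < d /\ forall t, z - d < t < z -> Rabs (f t - L) < eps.
Proof.
  intros H eps He.
  destruct (proj1 (filterlim_locally f L) H (mkposreal eps He)) as [d Hd].
  exists d; split; [apply cond_pos|].
  intros t Ht. apply ball_R. apply (Hd t); [|lra].
  apply ball_R. rewrite Rabs_left; lra.
Qed.

Lemma at_right_eps f z L : filterlim f (at_right z) (locally L) ->
  forall eps, 0 < eps -> exists d, 0 < d /\ forall t, z < t < z + d -> Rabs (f t - L) < eps.
Proof.
  intros H eps He.
  destruct (proj1 (filterlim_locally f L) H (mkposreal eps He)) as [d Hd].
  exists d; split; [apply cond_pos|].
  intros t Ht. apply ball_R. apply (Hd t); [|lra].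
  apply ball_R. rewrite Rabs_right; lra.
Qed.

Lemma cont_eps f z : continuous f z ->
  forall eps, 0 < eps -> exists d, 0 < d /\ forall t, Rabs (t - z) < d -> Rabs (f t - f z) < eps.
Proof.
  intros H eps He.
  destruct (proj1 (filterlim_locally f (f z)) H (mkposreal eps He)) as [d Hd].
  exists d; split; [apply cond_pos|].
  intros t Ht. apply ball_R. apply (Hd t). apply ball_R. exact Ht.
Qed.

Lemma at_left_lim f z L : (forall eps, 0 < eps -> exists d, 0 < d /\
   forall t, z - d < t < z -> Rabs (f t - L) < eps) -> filterlim f (at_left z) (locally L).
Proof.
  intros H. apply filterlim_locally. intros eps.
  destruct (H eps (cond_pos eps)) as [d [Hd Hd']].
  exists (mkposreal d Hd). intros y Hy Hyz. apply ball_R. apply Hd'.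
  apply ball_R in Hy. apply Rabs_def2 in Hy. unfold minus, plus, opp in Hy; simpl in Hy. lra.
Qed.

Lemma cont_left (f : R -> R) z : continuous f z -> filterlim f (at_left z) (locally (f z)).
Proof. intro H. eapply filterlim_filter_le_1; [apply filter_le_within|exact H]. Qed.

Lemma lim_mult {T} (F : (T->Prop)->Prop) {FF : Filter F} (f g : T -> R) a b :
  filterlim f F (locally a) -> filterlim g F (locally b) ->
  filterlim (fun t => f t * g t) F (locally (a*b)).
Proof. intros Hf Hg. eapply filterlim_comp_2; [exact Hf|exact Hg|]. apply (filterlim_mult a b). Qed.

Lemma lim_plus {T} (F : (T->Prop)->Prop) {FF : Filter F} (f g : T -> R) a b :
  filterlim f F (locally a) -> filterlim g F (locally b) ->
  filterlim (fun t => f t + g t) F (locally (a+b)).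
Proof. intros Hf Hg. eapply filterlim_comp_2; [exact Hf|exact Hg|]. apply (filterlim_plus a b). Qed.

Lemma lim_opp {T} (F : (T->Prop)->Prop) {FF : Filter F} (f : T -> R) a :
  filterlim f F (locally a) -> filterlim (fun t => - f t) F (locally (-a)).
Proof. intros Hf. exact (filterlim_comp _ _ _ f opp F (locally a) (locally (opp a)) Hf (filterlim_opp a)). Qed.

Lemma lim_minus {T} (F : (T->Prop)->Prop) {FF : Filter F} (f g : T -> R) a b :
  filterlim f F (locally a) -> filterlim g F (locally b) ->
  filterlim (fun t => f t - g t) F (locally (a-b)).
Proof. intros Hf Hg. apply lim_plus; auto. apply lim_opp; auto. Qed.

Lemma lim_eq {T} (F : (T->Prop)->Prop) (f : T -> R) a b :
  filterlim f F (locally a) -> a = b -> filterlim f F (locally b).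
Proof. intros H <-; exact H. Qed.

Lemma is_derive_mult' f g x df dg : is_derive f x df -> is_derive g x dg ->
  is_derive (fun t => f t * g t) x (df * g x + f x * dg).
Proof. intros Hf Hg. exact (is_derive_mult f g x df dg Hf Hg Rmult_comm). Qed.

Lemma is_derive_minus' f g x df dg : is_derive f x df -> is_derive g x dg ->
  is_derive (fun t => f t - g t) x (df - dg).
Proof. intros Hf Hg. exact (is_derive_minus f g x df dg Hf Hg). Qed.

Lemma deriv_weight m f t df : 0 < t -> is_derive f t df ->
  is_derive (fun s => s^(S m) * f s) t (t^(S m) * (df + INR (S m) / t * f t)).
Proof.
  intros Ht Hf.
  assert (Hp : is_derive (fun s:R => s^(S m)) t (INR (S m) * 1 * t^m)).
  { exact (is_derive_pow (fun s => s) (S m) t 1 (is_derive_id t)). }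
  assert (H := is_derive_mult' _ _ _ _ _ Hp Hf).
  replace (t^(S m) * (df + INR (S m) / t * f t)) with (INR (S m) * 1 * t ^ m * f t + t ^ S m * df).
  exact H. simpl. field. lra.
Qed.

Lemma first_zero (f : R -> R) r : (forall x, 0 < x -> continuous f x) ->
  filterlim f (at_right 0) (locally (f 0)) -> 0 < f 0 -> 0 < r -> f r <= 0 ->
  exists z, 0 < z <= r /\ (forall s, 0 <= s < z -> 0 < f s) /\ f z = 0.
Proof.
  intros Hc H0 Hf0 Hr Hfr.
  set (E := fun x => 0 <= x <= r /\ forall s, 0 <= s <= x -> 0 < f s).
  assert (Hb : bound E) by (exists r; intros x [Hx _]; lra).
  assert (He : exists x, E x).
  { exists 0. split; [lra|]. intros s Hs. replace s with 0 by lra. exact Hf0. }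
  destruct (completeness E Hb He) as [z [Hub Hlub]].
  assert (Hzr : z <= r) by (apply Hlub; intros x [Hx _]; lra).
  assert (Hz0 : 0 <= z) by (apply Hub; unfold E; split; [lra|]; intros s Hs; replace s with 0 by lra; exact Hf0).
  assert (Hpos : forall s, 0 <= s < z -> 0 < f s).
  { intros s Hs. destruct (classic (exists x, E x /\ s < x)) as [[x [[_ Hx] Hsx]]|Hn].
    - apply Hx; lra.
    - exfalso. assert (z <= s); [|lra]. apply Hlub. intros x Ex.
      destruct (Rle_lt_dec x s); auto. exfalso; apply Hn; eauto. }
  assert (Hzp : 0 < z).
  { destruct (at_right_eps _ _ _ H0 (f 0) Hf0) as [d [Hd Hd']].
    assert (E (Rmin (d/2) r)).
    { split. split; [apply Rmin_glb; lra| apply Rmin_r].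
      intros s Hs. destruct (Req_dec s 0) as [->|Hs0]; auto.
      assert (Hm := Rmin_l (d/2) r).
      specialize (Hd' s ltac:(lra)). apply Rabs_def2 in Hd'. lra. }
    assert (Rmin (d/2) r <= z) by (apply Hub; auto).
    assert (0 < Rmin (d/2) r) by (apply Rmin_glb_lt; lra). lra. }
  exists z. split; [lra|]. split; [exact Hpos|].
  destruct (Rtotal_order (f z) 0) as [Hlt|[Heq|Hgt]]; auto; exfalso.
  - destruct (cont_eps f z (Hc z Hzp) (- f z) ltac:(lra)) as [d [Hd Hd']].
    set (s := Rmax (z - d/2) 0).
    assert (Hs1 : 0 <= s) by apply Rmax_r.
    assert (Hs2 : s < z) by (apply Rmax_lub_lt; lra).
    assert (Hs3 : z - d/2 <= s) by apply Rmax_l.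
    specialize (Hpos s (conj Hs1 Hs2)).
    specialize (Hd' s ltac:(rewrite Rabs_left; lra)). apply Rabs_def2 in Hd'. lra.
  - destruct (Req_dec z r) as [->|Hzr'].
    + lra.
    + destruct (cont_eps f z (Hc z Hzp) (f z) Hgt) as [d [Hd Hd']].
      set (x := Rmin (z + d/2) r).
      assert (Hx1 : z < x) by (apply Rmin_glb_lt; lra).
      assert (Hx2 : x <= z + d/2) by apply Rmin_l.
      assert (E x).
      { split. split; [lra|apply Rmin_r].
        intros s Hs. destruct (Rlt_le_dec s z). apply Hpos; lra.
        specialize (Hd' s ltac:(rewrite Rabs_right; lra)). apply Rabs_def2 in Hd'. lra. }
      assert (x <= z) by (apply Hub; auto). lra.
Qed.

Lemma bounded_null (f g : R -> R) z :
  (exists d M, 0 < d /\ forall t, z - d < t < z -> Rabs (f t) <= M) ->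
  filterlim g (at_left z) (locally 0) ->
  filterlim (fun t => f t * g t) (at_left z) (locally 0).
Proof.
  intros [d [M [Hd HM]]] Hg. apply at_left_lim. intros eps He.
  set (M' := Rabs M + 1).
  assert (HM' : 0 < M') by (unfold M'; pose proof (Rabs_pos M); lra).
  destruct (at_left_eps _ _ _ Hg (eps / M') ltac:(apply Rdiv_lt_0_compat; lra)) as [d' [Hd1 Hd2]].
  exists (Rmin d d'). split; [apply Rmin_glb_lt; lra|].
  intros t Ht. assert (Hm1 := Rmin_l d d'). assert (Hm2 := Rmin_r d d').
  specialize (HM t ltac:(lra)). specialize (Hd2 t ltac:(lra)).
  rewrite Rminus_0_r in *. rewrite Rabs_mult.
  assert (Rabs M >= M) by (apply Rle_ge, RRle_abs).
  assert (Rabs (f t) < M') by (unfold M'; lra).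
  assert (Hq : M' * (eps / M') = eps) by (field; lra).
  pose proof (Rabs_pos (f t)). pose proof (Rabs_pos (g t)).
  nra.
Qed.

Lemma deriv_sign (f : R -> R) z l : 0 < z -> is_derive f z l -> f z = 0 ->
  (forall s, 0 <= s < z -> 0 < f s) -> l <= 0.
Proof.
  intros Hz Hd Hfz Hpos. apply is_derive_Reals in Hd.
  destruct (Rle_lt_dec l 0) as [|Hl]; auto. exfalso.
  destruct (Hd l Hl) as [del Hdel].
  set (h := - Rmin (del/2) (z/2)).
  assert (Hm1 := Rmin_l (del/2) (z/2)). assert (Hm2 := Rmin_r (del/2) (z/2)).
  assert (Hm3 : 0 < Rmin (del/2) (z/2)) by (apply Rmin_glb_lt; pose proof (cond_pos del); lra).
  assert (Hh : h < 0) by (unfold h; lra).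
  specialize (Hdel h ltac:(lra) ltac:(rewrite Rabs_left; unfold h; pose proof (cond_pos del); lra)).
  rewrite Hfz, Rminus_0_r in Hdel.
  assert (Hp : 0 < f (z + h)) by (apply Hpos; unfold h; lra).
  assert (Hq : f (z + h) / h < 0).
  { unfold Rdiv. assert (/ h < 0) by (apply Rinv_lt_0_compat; lra). nra. }
  apply Rabs_def2 in Hdel. lra.
Qed.

Lemma cont_right (f : R -> R) z : continuous f z -> filterlim f (at_right z) (locally (f z)).
Proof. intro H. eapply filterlim_filter_le_1; [apply filter_le_within|exact H]. Qed.

Lemma pow_cont k x : continuous (fun s : R => s^k) x.
Proof.
  assert (H : ex_derive (fun s : R => s^k) x).
  { eexists. apply (is_derive_pow (fun s=>s) k x 1 (is_derive_id x)). }
  pose proof (ex_derive_continuous (K := R_AbsRing) _ x H) as H'. exact H'.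
Qed.

Lemma exd_cont (f : R -> R) x : ex_derive f x -> continuous f x.
Proof. intro H. pose proof (ex_derive_continuous (K := R_AbsRing) f x H) as H'. exact H'. Qed.

Lemma rpow_pos x p : 0 < Rpower x p.
Proof. unfold Rpower; apply exp_pos. Qed.

Lemma rpow_lt1 x p : 0 < x < 1 -> 0 < p -> Rpower x p < 1.
Proof.
  intros [H1 H2] Hp. unfold Rpower. rewrite <- exp_0. apply exp_increasing.
  assert (ln x < 0) by (rewrite <- ln_1; apply ln_increasing; lra). nra.
Qed.

Theorem lemma2p1 (N : nat) (p b lam : R) (u0 phi : R -> R) :
  (3 <= N)%nat ->
  (INR N + 2) / (INR N - 2) < p ->
  0 < b -> 0 < lam ->
  positive_solution N p lam b u0 ->
  linear_solution N lam phi ->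
  forall r, 0 <= r <= b -> 0 < phi r.
Proof.
  intros HN Hp Hb Hlam [Hu [Hu0 [Hdu0 [Hub [Hub0 Hupos]]]]] [Hph [Hph0 [Hph1 Hdph0]]] r [Hr0 Hrb].
  assert (Hp0 : 0 < p).
  { assert (H3 : 3 <= INR N) by (replace 3 with (INR 3) by (simpl; ring); apply le_INR; exact HN).
    eapply Rlt_trans; [|exact Hp]. apply Rdiv_lt_0_compat; lra. }
  destruct N as [|[|m]]; [lia|lia|].
  assert (HN1 : INR (S (S m)) - 1 = INR (S m)) by (rewrite (S_INR (S m)); ring).
  destruct (Rlt_or_le 0 (phi r)) as [|Hneg]; auto. exfalso.
  destruct Hr0 as [Hr0|Hr0]; [|subst r; lra].
  assert (Hphc : forall x, 0 < x -> continuous phi x).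
  { intros x Hx. pose proof (ex_derive_continuous (K := R_AbsRing) phi x (proj1 (Hph x Hx))) as H. exact H. }
  destruct (first_zero phi r Hphc Hph0 ltac:(lra) Hr0 Hneg) as [z [[Hz0 Hzr] [Hzpos Hz]]].
  assert (Hzb : z <= b) by lra.
  set (W := fun s => s^(S m) * (Derive u0 s * phi s - u0 s * Derive phi s)).
  set (dW := fun s => - (s^(S m) * Rpower (u0 s) p * phi s)).
  assert (HdW : forall x, 0 < x < z -> is_derive W x (dW x)).
  { intros x Hx.
    destruct (Hu x ltac:(lra)) as [Hu1 [Hu2 Hu3]].
    destruct (Hph x ltac:(lra)) as [Hp1 [Hp2 Hp3]].
    rewrite HN1 in Hu3, Hp3.
    assert (Hf := is_derive_minus' _ _ _ _ _
       (is_derive_mult' _ _ _ _ _ (Derive_correct _ _ Hu2) (Derive_correct _ _ Hp1))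
       (is_derive_mult' _ _ _ _ _ (Derive_correct _ _ Hu1) (Derive_correct _ _ Hp2))).
    assert (H := deriv_weight m _ x _ ltac:(lra) Hf).
    match type of H with is_derive _ _ ?v => replace (dW x) with v; [exact H|] end.
    unfold dW.
    replace (Derive (Derive u0) x) with (-(INR (S m) / x * Derive u0 x) - lam * u0 x - Rpower (u0 x) p) by lra.
    replace (Derive (Derive phi) x) with (-(INR (S m) / x * Derive phi x) - lam * phi x) by lra.
    ring. }
  assert (Hdec : forall s t, 0 < s -> s < t -> t < z -> W t < W s).
  { intros s t Hs Hst Htz.
    destruct (MVT_gen W s t dW) as [c [Hc Heq]].
    - rewrite Rmin_left, Rmax_right by lra. intros x Hx. apply HdW; lra.
    - rewrite Rmin_left, Rmax_right by lra. intros x Hx. apply continuity_pt_filterlim.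
      apply (exd_cont W x). eexists. apply HdW; lra.
    - rewrite Rmin_left, Rmax_right in Hc by lra.
      assert (dW c < 0).
      { unfold dW. assert (0 < c^(S m)) by (apply pow_lt; lra).
        assert (0 < phi c) by (apply Hzpos; lra). pose proof (rpow_pos (u0 c) p).
        assert (0 < c^(S m) * Rpower (u0 c) p * phi c)
          by (apply Rmult_lt_0_compat; [apply Rmult_lt_0_compat|]; lra). lra. }
      nra. }
  assert (HW0 : filterlim W (at_right 0) (locally 0)).
  { apply lim_eq with (0^(S m) * (0 * phi 0 - u0 0 * 0)).
    - unfold W. apply (lim_mult (at_right 0)).
      + apply (cont_right (fun s : R => s^(S m))). apply pow_cont.
      + apply (lim_minus (at_right 0)); apply (lim_mult (at_right 0)); auto.
    - simpl; ring. }
  assert (HWq : W (z/4) <= 0).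
  { destruct (Rle_lt_dec (W (z/4)) 0) as [|Hlt]; auto. exfalso.
    destruct (at_right_eps _ _ _ HW0 _ Hlt) as [d [Hd Hd']].
    set (s := Rmin (d/2) (z/8)).
    assert (0 < s) by (apply Rmin_glb_lt; lra).
    assert (s <= d/2) by apply Rmin_l. assert (s <= z/8) by apply Rmin_r.
    specialize (Hd' s ltac:(lra)). rewrite Rminus_0_r in Hd'. apply Rabs_def2 in Hd'.
    specialize (Hdec s (z/4) ltac:(lra) ltac:(lra) ltac:(lra)). lra. }
  assert (HWh : W (z/2) < 0)
    by (specialize (Hdec (z/4) (z/2) ltac:(lra) ltac:(lra) ltac:(lra)); lra).
  assert (Hbd : exists d M, 0 < d /\ forall t, z - d < t < z -> Rabs (Derive u0 t) <= M).
  { destruct (Rlt_le_dec z b) as [Hzb'|Hzb'].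
    - destruct (Hu z ltac:(lra)) as [_ [Hu2 _]].
      destruct (cont_eps _ _ (exd_cont _ _ Hu2) 1 Rlt_0_1) as [d [Hd Hd']].
      exists d, (Rabs (Derive u0 z) + 1). split; auto. intros t Ht.
      specialize (Hd' t ltac:(rewrite Rabs_left; lra)).
      pose proof (Rabs_triang_inv (Derive u0 t) (Derive u0 z)). lra.
    - assert (Hzb2 : z = b) by lra. rewrite Hzb2. rewrite Hub0 in Hub.
      destruct (at_left_eps _ _ _ Hub 1 Rlt_0_1) as [d1 [Hd1 Hd1']].
      set (t0 := b - Rmin d1 b / 2).
      assert (Hm1 := Rmin_l d1 b). assert (Hm2 := Rmin_r d1 b).
      assert (Hm3 : 0 < Rmin d1 b) by (apply Rmin_glb_lt; lra).
      assert (Ht0 : 0 < t0 < b /\ b - d1 < t0) by (unfold t0; lra).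
      set (g := fun s => s^(S m) * Derive u0 s).
      set (dg := fun s => - (s^(S m) * (lam * u0 s + Rpower (u0 s) p))).
      assert (Hdg : forall x, 0 < x < b -> is_derive g x (dg x)).
      { intros x Hx. destruct (Hu x Hx) as [Hu1 [Hu2 Hu3]]. rewrite HN1 in Hu3.
        assert (H := deriv_weight m _ x _ ltac:(lra) (Derive_correct _ _ Hu2)).
        match type of H with is_derive _ _ ?v => replace (dg x) with v; [exact H|] end.
        unfold dg.
        replace (Derive (Derive u0) x) with (-(INR (S m) / x * Derive u0 x) - lam * u0 x - Rpower (u0 x) p) by lra.
        ring. }
      set (K := Rabs (g t0) + b^(S m) * (lam + 1) * b).
      exists (b - t0), (K / t0^(S m)). split; [lra|]. intros t Ht.
      destruct (MVT_gen g t0 t dg) as [c [Hc Heq]].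
      + rewrite Rmin_left, Rmax_right by lra. intros x Hx. apply Hdg; lra.
      + rewrite Rmin_left, Rmax_right by lra. intros x Hx. apply continuity_pt_filterlim.
        apply (exd_cont g x). eexists. apply Hdg; lra.
      + rewrite Rmin_left, Rmax_right in Hc by lra.
        assert (Huc : 0 < u0 c < 1).
        { split; [apply Hupos; lra|]. specialize (Hd1' c ltac:(lra)).
          rewrite Rminus_0_r in Hd1'; apply Rabs_def2 in Hd1'; lra. }
        assert (Hpc : 0 < Rpower (u0 c) p < 1) by (split; [apply rpow_pos|apply rpow_lt1; lra]).
        assert (Hcb : 0 < c^(S m) <= b^(S m)) by (split; [apply pow_lt; lra| apply pow_incr; lra]).
        assert (Hdgc : Rabs (dg c) <= b^(S m) * (lam + 1)).
        { unfold dg. assert (0 < lam * u0 c + Rpower (u0 c) p <= lam + 1) by nra.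
          rewrite Rabs_Ropp, Rabs_right by nra. apply Rmult_le_compat; lra. }
        assert (Hgt : Rabs (g t) <= K).
        { replace (g t) with (g t0 + dg c * (t - t0)) by lra.
          eapply Rle_trans; [apply Rabs_triang|]. unfold K. apply Rplus_le_compat_l.
          rewrite Rabs_mult. rewrite (Rabs_right (t - t0)) by lra.
          apply Rmult_le_compat; try apply Rabs_pos; lra. }
        assert (Htp : 0 < t0^(S m) <= t^(S m)) by (split; [apply pow_lt; lra| apply pow_incr; lra]).
        assert (Htp2 : 0 < t^(S m)) by lra.
        replace (Derive u0 t) with (g t / t^(S m)) by (unfold g; field; lra).
        unfold Rdiv. rewrite Rabs_mult, Rabs_inv, (Rabs_right (t^(S m))) by lra.
        apply Rmult_le_compat; [apply Rabs_pos | left; apply Rinv_0_lt_compat; lra | exact Hgt |].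
        apply Rinv_le_contravar; lra. }
  assert (HWz : filterlim W (at_left z) (locally (z^(S m) * (0 - u0 z * Derive phi z)))).
  { unfold W. apply (lim_mult (at_left z)).
    - apply (cont_left (fun s : R => s^(S m))). apply pow_cont.
    - apply (lim_minus (at_left z)).
      + apply bounded_null; auto. rewrite <- Hz. apply cont_left. apply Hphc; lra.
      + apply (lim_mult (at_left z)).
        * destruct (Rlt_le_dec z b).
          -- apply cont_left. apply exd_cont. apply (proj1 (Hu z ltac:(lra))).
          -- assert (z = b) by lra. subst z. exact Hub.
        * apply cont_left. apply exd_cont. apply (proj1 (proj2 (Hph z ltac:(lra)))). }
  assert (Hdphz : Derive phi z <= 0).
  { apply (deriv_sign phi z); auto. apply Derive_correct; apply (proj1 (Hph z ltac:(lra))). }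
  assert (Huz : 0 <= u0 z).
  { destruct (Rlt_le_dec z b); [left; apply Hupos; lra| replace z with b by lra; lra]. }
  assert (HL : 0 <= z^(S m) * (0 - u0 z * Derive phi z))
    by (apply Rmult_le_pos; [apply pow_le; lra| nra]).
  destruct (at_left_eps _ _ _ HWz (- W (z/2)) ltac:(lra)) as [d [Hd Hd']].
  set (t := z - Rmin d (z/2) / 2).
  assert (Hm1 := Rmin_l d (z/2)). assert (Hm2 := Rmin_r d (z/2)).
  assert (Hm3 : 0 < Rmin d (z/2)) by (apply Rmin_glb_lt; lra).
  specialize (Hd' t ltac:(unfold t; lra)). apply Rabs_def2 in Hd'.
  specialize (Hdec (z/2) t ltac:(lra) ltac:(unfold t; lra) ltac:(unfold t; lra)). lra.
Qed.
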